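(* Let $X$ be a finite set and $S\subset\mathbb F_X$. Then $S$ is UB-generic if and only if for every $n\in\mathbb N$ there exists $\omega_n\in\mathbb F_X$ such that $\omega_n B_n\subset S$.
   Context: $\mathbb F_X$ is the free group on $X$, $|\omega|$ the reduced word length, $B_n=\{\omega\in\mathbb F_X:|\omega|\le n\}$. The Upper Banach density of $S\subset\mathbb F_X$ is $\overline\mu(S)=\limsup_{n\to\infty}\max_{\omega\in\mathbb F_X}\frac{|S\cap\omega B_n|}{|B_n|}$, and $S$ is UB-generic if $\overline\mu(S)=1$. *)

(* Defs.v *)
From Stdlib Require Import Reals.
From Coquelicot Require Import Coquelicot.
From mathcomp Require Import all_boot.

Set Implicit Arguments.
Unset Strict Implicit.
Unset Printing Implicit Defensive.

Section FreeGroup.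
Variable X : finType.

(* a letter is a generator x (false) or its inverse x^-1 (true) *)
Definition letter := (X * bool)%type.
Definition inv_letter (a : letter) : letter := (a.1, ~~ a.2).

(* reduced words: no adjacent pair  a a^-1 *)
Definition reduced (w : seq letter) : bool :=
  sorted (fun a b => b != inv_letter a) w.

Definition push (a : letter) (w : seq letter) : seq letter :=
  match w with
  | b :: w' => if b == inv_letter a then w' else a :: w
  | [::] => [:: a]
  end.

Definition reduce (w : seq letter) : seq letter := foldr push [::] w.

Lemma push_reduced a w : reduced w -> reduced (push a w).
Proof.
case: w => [|b w] //= Hw.
case: ifP => Hb.
  by case: w Hw => [|c w] //= /andP [].
by rewrite /= Hb Hw.
Qed.

Lemma reduce_reduced w : reduced (reduce w).
Proof. by elim: w => [|a w IH] //=; apply: push_reduced. Qed.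

Definition FX := {w : seq letter | reduced w}.

Definition FX_of (w : seq letter) : FX := exist _ (reduce w) (reduce_reduced w).

Definition mulFX (u v : FX) : FX := FX_of (proj1_sig u ++ proj1_sig v).

Definition wlen (w : FX) : nat := size (proj1_sig w).

Fixpoint words (k : nat) : seq (seq letter) :=
  match k with
  | 0 => [:: [::]]
  | k'.+1 => [seq a :: w | a <- enum {: letter}, w <- words k']
  end.

(* B_n, enumerated as a duplicate-free list of the elements of F_X of length <= n *)
Definition ball (n : nat) : seq FX :=
  pmap (fun w => (insub w : option FX))
       (flatten [seq words k | k <- iota 0 n.+1]).

(* |S ∩ ωB_n| : the left translate ωB_n is enumerated without repetition by
   mapping left multiplication by ω over B_n *)
Definition card_inter (S : FX -> bool) (om : FX) (n : nat) : nat :=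
  count S [seq mulFX om b | b <- ball n].

Definition ratio (S : FX -> bool) (om : FX) (n : nat) : R :=
  Rdiv (INR (card_inter S om n)) (INR (size (ball n))).

(* max over ω (a finite set of values, so sup = max) *)
Definition max_ratio (S : FX -> bool) (n : nat) : R :=
  real (Lub_Rbar (fun r => exists om : FX, r = ratio S om n)).

Definition UB_density (S : FX -> bool) : Rbar := LimSup_seq (max_ratio S).

Definition UB_generic (S : FX -> bool) : Prop := UB_density S = Rbar.Finite R1.

End FreeGroup.

(* Main.v *)
Require Import Defs.
From Stdlib Require Import Reals Lra Psatz Classical FunctionalExtensionality.
From Coquelicot Require Import Coquelicot.
From mathcomp Require Import all_boot zify.
Set Implicit Arguments. Unset Strict Implicit.

Section Alg.
Variable X : finType.
Local Open Scope nat_scope.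
Local Notation letter := (letter X).
Local Notation push := (@push X).
Local Notation reduced := (@reduced X).
Local Notation inv := (@inv_letter X).

Definition P (u w : seq letter) := foldr push w u.

Lemma invK a : inv (inv a) = a.
Proof. by case: a => x b; rewrite /inv_letter /= negbK. Qed.

Lemma reduced_cons a w : reduced (a :: w) = (if w is b :: _ then b != inv a else true) && reduced w.
Proof. by case: w => [|b w] //=. Qed.

Lemma push_inv a x : reduced x -> push a (push (inv a) x) = x.
Proof.
case: x => [|b x] /=; first by rewrite eqxx.
move=> Hx.
case: eqP => [Hb|Hb].
- rewrite invK in Hb; subst b.
  case: x Hx => [|c x] //= /andP [Hc _].
  by rewrite (negbTE Hc).
- by rewrite /= eqxx.
Qed.

Lemma push_inv' a x : reduced x -> push (inv a) (push a x) = x.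
Proof. by move=> Hx; have := push_inv (inv a) Hx; rewrite invK. Qed.

Lemma reduce_id w : reduced w -> reduce w = w.
Proof.
elim: w => [|a w IH] //= Hw.
have Hw' : reduced w by case: w Hw {IH} => //= b w /andP [].
rewrite IH //.
case: w Hw Hw' {IH} => [|b w] //= /andP [Hb _] _.
by rewrite (negbTE Hb).
Qed.

Lemma P_reduced u w : reduced w -> reduced (P u w).
Proof. by elim: u => [|a u IH] //= Hw; apply: push_reduced; apply: IH. Qed.

Lemma P_push a r w : reduced r -> reduced w -> P (push a r) w = push a (P r w).
Proof.
case: r => [|b r] //= Hr Hw.
case: eqP => [->|_] //=.
rewrite push_inv //.
apply: P_reduced.
done.
Qed.

Lemma P_reduce u w : reduced w -> P (reduce u) w = P u w.
Proof.
move=> Hw; elim: u => [|a u IH] //=.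
by rewrite P_push ?reduce_reduced // IH.
Qed.

Lemma P_cat u v w : P (u ++ v) w = P u (P v w).
Proof. by rewrite /P foldr_cat. Qed.

Lemma valmul (u v : FX X) : val (mulFX u v) = P (val u) (val v).
Proof.
rewrite /mulFX /FX_of /= /reduce -/(P _ _) P_cat.
by rewrite /P -/(reduce _) reduce_id //; case: v.
Qed.

Lemma P_assoc u v w : reduced v -> reduced w -> P (P u v) w = P u (P v w).
Proof.
move=> Hv Hw.
have -> : P u v = reduce (u ++ v) by rewrite /reduce -/(P _ _) P_cat /P -/(reduce v) reduce_id.
by rewrite P_reduce // P_cat.
Qed.

Lemma mulA (u v w : FX X) : mulFX u (mulFX v w) = mulFX (mulFX u v) w.
Proof.
apply: val_inj.
rewrite !valmul P_assoc //; [by case: v | by case: w].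
Qed.

Definition winv (u : seq letter) := rev (map inv u).

Lemma P_winv u w : reduced w -> P (winv u) (P u w) = w.
Proof.
move=> Hw; elim: u => [|a u IH] //=.
rewrite /winv /= rev_cons /P foldr_rcons -/(P _ _).
by rewrite push_inv' ?IH //; apply: P_reduced.
Qed.

Lemma winvK u : winv (winv u) = u.
Proof. by rewrite /winv map_rev revK -map_comp (eq_map invK) map_id. Qed.

Lemma mulK (c c' b : FX X) : mulFX c b = mulFX c' b -> c = c'.
Proof.
move=> H.
have key : forall d : FX X, val (mulFX (mulFX d b) (FX_of (winv (val b)))) = val d.
  move=> d; rewrite !valmul P_assoc; last (by apply: reduce_reduced); last by case: (b).
  have -> : val (FX_of (winv (val b))) = P (winv (val b)) [::] by [].
  have := P_winv (winv (val b)) (w := [::]) isT.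
  rewrite winvK => ->.
rewrite (_ : P (val d) [::] = reduce (val d)) // reduce_id //; by case: d.
apply: val_inj; by rewrite -(key c) -(key c') H.
Qed.

Lemma size_push a w : size (push a w) <= (size w).+1.
Proof. case: w => [|b w] //=; case: ifP => //= _; exact: leqW. Qed.

Lemma size_P u w : size (P u w) <= size u + size w.
Proof.
elim: u => [|a u IH] //=.
apply: leq_trans (size_push _ _) _; by rewrite ltnS.
Qed.

Lemma wlen_mul (u v : FX X) : wlen (mulFX u v) <= wlen u + wlen v.
Proof. by rewrite /wlen valmul size_P. Qed.

Lemma mem_words k w : (w \in words X k) = (size w == k).
Proof.
elim: k w => [|k IH] [|a w] //=.
- by apply/allpairsP; case=> [[b v]] /= [_ _].
- rewrite eqSS -IH; apply/allpairsP/idP.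
  + by case=> [[b v]] /= [_ Hv [_ ->]].
  + by move=> Hw; exists (a, w); rewrite /= mem_enum.
Qed.

Lemma uniq_words k : uniq (words X k).
Proof.
elim: k => [|k IH] //=.
apply: allpairs_uniq => //; first exact: enum_uniq.
by move=> [a v] [b w] _ _ /= [-> ->].
Qed.

Lemma mem_fw s w : (w \in flatten [seq words X k | k <- s]) = (size w \in s).
Proof. elim: s => [|k s IH] //=; by rewrite mem_cat IH mem_words in_cons. Qed.

Lemma uniq_fw s : uniq s -> uniq (flatten [seq words X k | k <- s]).
Proof.
elim: s => [|k s IH] //= /andP [Hk Hs].
rewrite cat_uniq uniq_words IH // andbT.
apply/hasPn => w; rewrite mem_fw => Hw; rewrite mem_words.
by apply/eqP => E; rewrite -E Hw in Hk.
Qed.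

Lemma mem_ball n (b : FX X) : (b \in Defs.ball X n) = (wlen b <= n).
Proof. by rewrite /Defs.ball mem_pmap_sub mem_fw mem_iota add0n ltnS. Qed.

Lemma uniq_ball n : uniq (Defs.ball X n).
Proof. apply: pmap_sub_uniq; apply: uniq_fw; exact: iota_uniq. Qed.

Lemma val_FX_of w : reduced w -> val (FX_of w) = w.
Proof. exact: reduce_id. Qed.

Lemma ball_split N m : m <= N ->
  size (Defs.ball X N) <= size (Defs.ball X (N - m)) * size (Defs.ball X m).
Proof.
move=> HmN.
pose k (w : FX X) := wlen w - m.
pose f (w : FX X) := (FX_of (take (k w) (val w)), FX_of (drop (k w) (val w))).
have Hr : forall (w : FX X) j, reduced (take j (val w)) /\ reduced (drop j (val w)).
  move=> w j; case: w => /= w Hw.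
  by rewrite -(cat_take_drop j w) in Hw; case: (cat_sorted2 Hw).
have finj : injective f.
  move=> w1 w2 [E1 E2]; apply: val_inj.
  have [A1 B1] := Hr w1 (k w1); have [A2 B2] := Hr w2 (k w2).
  rewrite !reduce_id // in E1 E2.
  by rewrite -(cat_take_drop (k w1) (val w1)) -(cat_take_drop (k w2) (val w2)) E1 E2.
rewrite -(size_allpairs pair) -(size_map f).
apply: uniq_leq_size; first by rewrite map_inj_uniq // uniq_ball.
move=> x /mapP [w Hw ->]; apply/allpairsP; exists (f w); split => //.
- have [A _] := Hr w (k w).
  rewrite mem_ball /wlen val_FX_of //.
  apply: leq_trans (_ : _ <= k w) _.
    by rewrite size_take; case: ifP => // /negbT; rewrite -leqNgt.
  rewrite mem_ball in Hw; rewrite /k; lia.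
- have [_ B] := Hr w (k w).
  rewrite mem_ball /wlen val_FX_of // size_drop /k /wlen.
  by case: w Hw B => w Hw /= _ _; lia.
Qed.

Lemma count_bound (S : FX X -> bool) N m (om : FX X) :
  (forall om', has (fun b => ~~ S (mulFX om' b)) (Defs.ball X m)) -> m <= N ->
  size (Defs.ball X (N - m)) <= count (fun d => ~~ S (mulFX om d)) (Defs.ball X N) * size (Defs.ball X m).
Proof.
move=> H HmN.
pose Q c := fun b => ~~ S (mulFX (mulFX om c) b).
pose bc (c : FX X) := nth c (Defs.ball X m) (find (Q c) (Defs.ball X m)).
have Hb1 c : Q c (bc c) by apply: nth_find; apply: H.
have Hb2 c : bc c \in Defs.ball X m by apply: mem_nth; rewrite -has_find; apply: H.
pose f c := (mulFX c (bc c), bc c).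
have finj : injective f.
  move=> c1 c2 E; have E1 := congr1 fst E; have E2 := congr1 snd E; rewrite /= in E1 E2; rewrite -E2 in E1; exact: mulK E1.
rewrite -size_filter -(size_allpairs pair) -(size_map f (Defs.ball X (N - m))).
apply: uniq_leq_size; first by rewrite map_inj_uniq // uniq_ball.
move=> x /mapP [c Hc ->]; apply/allpairsP; exists (f c); split => //.
- rewrite mem_filter mulA; apply/andP; split; first exact: Hb1. rewrite /= mem_ball.
  apply: leq_trans (wlen_mul _ _) _.
  move: (Hb2 c) Hc; rewrite !mem_ball; lia.
- exact: Hb2.
Qed.

End Alg.

Unset Implicit Arguments.
Lemma real_ineq (c sz M : R) : 0 < sz -> 0 < M -> c*M*M + sz <= sz*M*M -> c/sz <= 1 - /(M*M).
Proof.
intros Hs HM H.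
assert (HK : 0 < M*M) by nra.
assert (E : c/sz + /(M*M) = (c*M*M + sz) * /(sz*(M*M))) by (field; lra).
assert (E1 : (sz*M*M) * /(sz*(M*M)) = 1) by (field; lra).
assert (0 < /(sz*(M*M))) by (apply Rinv_0_lt_compat; nra).
assert (c/sz + /(M*M) <= 1).
{ rewrite E -E1. apply Rmult_le_compat_r; lra. }
lra.
Qed.

Definition e0 (X : finType) : FX X := exist _ [::] isT.

Lemma size_ball_pos (X : finType) n : (0 < size (Defs.ball X n))%N.
Proof.
have : e0 X \in Defs.ball X n by rewrite mem_ball.
by case: (Defs.ball X n).
Qed.

Lemma ratio_le1 (X : finType) (S : FX X -> bool) om n : ratio S om n <= 1.
Proof.
rewrite /ratio.
have Hp := size_ball_pos X n.
have Hc : (card_inter S om n <= size (Defs.ball X n))%N.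
  by rewrite /card_inter; apply: leq_trans (count_size _ _) _; rewrite size_map.
have H0 : 0 < INR (size (Defs.ball X n)) by apply: lt_0_INR; apply/ltP.
have H1 : INR (card_inter S om n) <= INR (size (Defs.ball X n)) by apply: le_INR; apply/leP.
apply (Rmult_le_reg_r (INR (size (Defs.ball X n)))); first lra.
unfold Rdiv; rewrite Rmult_assoc Rinv_l; lra.
Qed.

Lemma lub_bound (E : R -> Prop) (x0 b : R) :
  E x0 -> (forall x, E x -> x <= b) -> real (Lub_Rbar E) <= b.
Proof.
move=> H0 Hb.
have [Hub Hl] := Lub_Rbar_correct E.
have Hle : Rbar_le (Lub_Rbar E) b by apply: Hl => x Hx; apply: Hb.
have Hge := Hub x0 H0.
case: (Lub_Rbar E) Hle Hge => //= r Hle _; lra.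
Qed.

Lemma lub_eq (E : R -> Prop) (b : R) :
  E b -> (forall x, E x -> x <= b) -> real (Lub_Rbar E) = b.
Proof.
move=> H0 Hb.
suff -> : Lub_Rbar E = Rbar.Finite b by [];
apply: is_lub_Rbar_unique; split.
- by move=> x Hx; apply: Hb.
- by move=> l Hl; apply: Hl.
Qed.

Theorem proposition2p2 (X : finType) (S : FX X -> bool) :
  UB_generic S <->
  (forall n : nat, exists om : FX X,
     forall b : FX X, (wlen b <= n)%N -> S (mulFX om b)).
Proof.
split.
- move=> HU m.
  apply: NNPP => Hn.
  have Hhas : forall om', has (fun b => ~~ S (mulFX om' b)) (Defs.ball X m).
    move=> om'; apply: NNPP => Hno; apply: Hn; exists om' => b Hb.
    case E: (S (mulFX om' b)) => //.
    exfalso; apply: Hno; apply/hasP; exists b; first by rewrite mem_ball.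
    by rewrite E.
  set M := size (Defs.ball X m).
  have HM : (0 < M)%N by apply: size_ball_pos.
  have HMR : 0 < INR M by apply: lt_0_INR; apply/ltP.
  have Hbound : forall N, (m <= N)%N -> max_ratio S N <= 1 - / (INR M * INR M).
    move=> N HmN.
    apply: (@lub_bound _ (ratio S (e0 X) N)); first by exists (e0 X).
    move=> x [om ->].
    have Hsplit := ball_split X HmN.
    have Hcnt := count_bound om Hhas HmN.
    have Hp := size_ball_pos X N.
    have Hsum := count_predC (fun d => S (mulFX om d)) (Defs.ball X N).
    rewrite /ratio /card_inter count_map.
    apply: real_ineq => //; first by apply: lt_0_INR; apply/ltP.
    rewrite -/M in Hsplit Hcnt *.
    move: Hsum Hsplit Hcnt.
    set c := count _ _; set k := count _ _; set s1 := size _; set s2 := size _.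
    move=> Hsum Hsplit Hcnt.
    have Hnat : (c * M * M + s1 <= s1 * M * M)%N by nia.
    have := le_INR _ _ (elimT leP Hnat).
    by rewrite !mult_INR plus_INR !mult_INR.
  have : Rbar_le (LimSup_seq (max_ratio S)) (LimSup_seq (fun _ => 1 - / (INR M * INR M))).
    apply: LimSup_le; exists m => n Hn'; apply: Hbound; exact/leP.
  rewrite LimSup_seq_const.
  move: HU; rewrite /UB_generic /UB_density => -> /=.
  have : 0 < / (INR M * INR M) by apply: Rinv_0_lt_compat; nra.
  lra.
- move=> H.
  rewrite /UB_generic /UB_density.
  have -> : max_ratio S = fun _ => 1.
    apply: functional_extensionality => n.
    have [om Hom] := H n.
    apply: lub_eq.
    + exists om; rewrite /ratio /card_inter.
      have -> : count S [seq mulFX om b | b <- Defs.ball X n] = size (Defs.ball X n).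
        rewrite count_map; apply/eqP; rewrite -all_count; apply/allP => b Hb.
        by apply: Hom; rewrite -mem_ball.
      have := size_ball_pos X n => /ltP /lt_0_INR ?.
      field; lra.
    + by move=> x [om' ->]; apply: ratio_le1.
  by rewrite LimSup_seq_const.
Qed.
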